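(* For $0\le p\le 1$ let $|\Psi_s\rangle=\cos\frac{\pi}{8}|000\rangle+\sin\frac{\pi}{8}|111\rangle$ and $$\rho_\chi(p,\pi/8)=p|\Psi_s\rangle\langle\Psi_s|+(1-p)\,|00\rangle\langle00|\otimes\tfrac{I_2}{2}.$$ Then the $3\times 9$ matrix $M$ with entries $M_{j,ik}=\mathrm{tr}[\rho_\chi(p,\pi/8)(\sigma_i\otimes\sigma_j\otimes\sigma_k)]$ has singular values $p,p,\frac{\sqrt2}{2}p$, and the maximal value of $|\mathrm{tr}(\mathcal{S}\rho_\chi(p,\pi/8))|$ over all Svetlichny operators $\mathcal{S}$ equals $4p$. In particular $\rho_\chi(p,\pi/8)$ does not violate the Svetlichny inequality for any $p\in[0,1]$.
   Context: $\sigma_1,\sigma_2,\sigma_3$ are the Pauli matrices, $I_2$ the $2\times2$ identity. For real unit vectors $\vec a,\vec a',\vec b,\vec b',\vec c,\vec c'\in\mathbb{R}^3$ let $A=\vec a\cdot\vec\sigma=\sum_k a_k\sigma_k$, and similarly $A',B,B',C,C'$. The Svetlichny operator is $$\mathcal{S}=A\otimes[(B+B')\otimes C+(B-B')\otimes C']+A'\otimes[(B-B')\otimes C-(B+B')\otimes C'],$$ and maxima are over all choices of the six unit vectors. A state violates the Svetlichny inequality if $|\mathrm{tr}(\mathcal{S}\rho)|>4$ for some such choice. *)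

(* Defs.v *)
From HB Require Import structures.
From mathcomp Require Import all_boot all_order all_algebra.
From mathcomp Require Import complex mxtens.
From mathcomp Require Import reals trigo.

Set Implicit Arguments.
Unset Strict Implicit.
Unset Printing Implicit Defensive.

Import Order.TTheory GRing.Theory Num.Theory.
Local Open Scope ring_scope.
Local Open Scope complex_scope.

Section Defs.
Variable R : realType.
Local Notation C := R[i].

Definition cR (x : R) : C := x +i* 0.

Definition adjmx m n (M : 'M[C]_(m, n)) : 'M[C]_(n, m) :=
  (map_mx (fun z : C => z^*%R) M)^T.

(* Pauli matrices sigma_1, sigma_2, sigma_3, indexed by 'I_3 (0 <-> 1, 1 <-> 2, 2 <-> 3) *)
Definition sigma1 : 'M[C]_2 :=
  \matrix_(i < 2, j < 2) (if i == j then 0 else 1).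
Definition sigma2 : 'M[C]_2 :=
  \matrix_(i < 2, j < 2)
    (if ((i : nat) == 0%N) && ((j : nat) == 1%N) then - 'i
     else if ((i : nat) == 1%N) && ((j : nat) == 0%N) then 'i else 0).
Definition sigma3 : 'M[C]_2 :=
  \matrix_(i < 2, j < 2)
    (if i == j then (if (i : nat) == 0%N then 1 else -1) else 0).
Definition pauli (k : 'I_3) : 'M[C]_2 :=
  match val k with 0%N => sigma1 | 1%N => sigma2 | _ => sigma3 end.

Definition dot_sigma (a : 'rV[R]_3) : 'M[C]_2 :=
  \sum_(k < 3) cR (a 0 k) *: pauli k.

Definition unit_vec (a : 'rV[R]_3) : Prop := \sum_(k < 3) a 0 k ^+ 2 = 1.

(* Three-qubit operators live in 'M_(2 * (2 * 2)), with X (x) Y (x) Z := X *t (Y *t Z). *)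
Definition svetlichny (a a' b b' c c' : 'rV[R]_3) : 'M[C]_(2 * (2 * 2)) :=
  let A := dot_sigma a in let A' := dot_sigma a' in
  let B := dot_sigma b in let B' := dot_sigma b' in
  let Cm := dot_sigma c in let C' := dot_sigma c' in
  A *t ((B + B') *t Cm + (B - B') *t C')
  + A' *t ((B - B') *t Cm - (B + B') *t C').

Definition ket0 : 'cV[C]_2 := \col_(i < 2) (if (i : nat) == 0%N then 1 else 0).
Definition ket1 : 'cV[C]_2 := \col_(i < 2) (if (i : nat) == 1%N then 1 else 0).

Definition psi_s : 'cV[C]_(2 * (2 * 2)) :=
  cR (cos (pi / 8)) *: (ket0 *t (ket0 *t ket0))
  + cR (sin (pi / 8)) *: (ket1 *t (ket1 *t ket1)).

Definition rho_chi (p : R) : 'M[C]_(2 * (2 * 2)) :=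
  cR p *: (psi_s *m adjmx psi_s)
  + cR (1 - p) *: ((ket0 *m adjmx ket0) *t ((ket0 *m adjmx ket0)
                     *t (cR (2^-1) *: (1%:M : 'M[C]_2)))).

(* The 3 x 9 correlation matrix M_{j, ik} = tr[rho (sigma_i (x) sigma_j (x) sigma_k)];
   the column index l : 'I_(3*3) encodes the pair (i, k) = mxtens_unindex l. *)
Definition corr_mx (rho : 'M[C]_(2 * (2 * 2))) : 'M[C]_(3, 3 * 3) :=
  \matrix_(j < 3, l < 3 * 3)
    \tr (rho *m (pauli (mxtens_unindex l).1
                  *t (pauli j *t pauli (mxtens_unindex l).2))).

(* Singular values of an m x n complex matrix M with m <= n: the list s
   (of length m, nonnegative entries) of the square roots of the eigenvalues
   of M M^dagger, counted with multiplicity, i.e. the characteristic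
   polynomial of M M^dagger is prod_{x in s} (X - x^2). *)
Definition singular_values m n (M : 'M[C]_(m, n)) (s : seq R) : Prop :=
  [/\ size s = m, all (fun x => 0 <= x) s &
      char_poly (M *m adjmx M) = \prod_(x <- s) ('X - (cR (x ^+ 2))%:P)].

End Defs.

(* Main.v *)
Set Warnings "-notation-overridden,-ambiguous-paths,-deprecated".
Require Import Defs.
From HB Require Import structures.
From mathcomp Require Import all_boot all_order all_algebra.
From mathcomp Require Import complex mxtens.
From mathcomp Require Import reals trigo.
From mathcomp Require Import ring lra.
Import Order.TTheory GRing.Theory Num.Theory.
Local Open Scope ring_scope.

Section Gen.
Variable K : comNzRingType.
Lemma L0g n (T M N : 'M[K]_n) (a b : K) :
  \tr (T *m (a *: M + b *: N)) = a * \tr (T *m M) + b * \tr (T *m N).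
Proof. by rewrite mulmxDr -!scalemxAr mxtraceD !mxtraceZ. Qed.

Lemma L1g n (T : 'M[K]_n) (al be ga de : K) (u v : 'cV[K]_n) (w1 w2 : 'rV[K]_n) :
  \tr (T *m ((al *: u + be *: v) *m (ga *: w1 + de *: w2))) =
  al * ga * \tr (T *m (u *m w1)) + al * de * \tr (T *m (u *m w2))
  + be * ga * \tr (T *m (v *m w1)) + be * de * \tr (T *m (v *m w2)).
Proof.
rewrite !mulmxDl !mulmxDr -!scalemxAl -!scalemxAr !mxtraceD !mxtraceZ.
ring.
Qed.

Lemma trTg m n (A : 'M[K]_m) (B : 'M[K]_n) : \tr (A *t B) = \tr A * \tr B.
Proof. by rewrite /mxtrace mulr_sum; apply: eq_bigr => k _; rewrite mxE. Qed.

Lemma L2g (X Y Z : 'M[K]_2) (x y z : 'cV[K]_2) (x' y' z' : 'rV[K]_2) :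
  \tr ((X *t (Y *t Z)) *m (@mulmx K (2*(2*2)) 1 (2*(2*2)) (x *t (y *t z)) (x' *t (y' *t z')))) =
  \tr (X *m (x *m x')) * (\tr (Y *m (y *m y')) * \tr (Z *m (z *m z'))).
Proof. rewrite (@tensmx_mul K 2 1 (2*2) (1*1) 2 (2*2) x (y *t z) x' (y' *t z')). by rewrite !tensmx_mul !trTg. Qed.

Lemma L3g (X Y Z P1 P2 : 'M[K]_2) (h : K) :
  \tr ((X *t (Y *t Z)) *m (P1 *t (P2 *t (h *: (1%:M : 'M[K]_2))))) =
  \tr (X *m P1) * (\tr (Y *m P2) * (h * \tr Z)).
Proof. by rewrite !tensmx_mul !trTg -scalemxAr mulmx1 mxtraceZ. Qed.

Lemma trSg n (M1 M2 M3 M4 rho : 'M[K]_n) :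
  \tr ((M1 + M2 + (M3 - M4)) *m rho) =
  \tr (M1 *m rho) + \tr (M2 *m rho) + \tr (M3 *m rho) - \tr (M4 *m rho).
Proof. by rewrite !mulmxDl mulNmx !mxtraceD linearN /= addrA. Qed.
Definition i0 : 'I_2 := ord0.
Definition i1 : 'I_2 := ord_max.
Lemma liftE : (lift ord0 (ord0 : 'I_1) : 'I_2) = i1.
Proof. exact: val_inj. Qed.
Lemma ord0E : (ord0 : 'I_2) = i0. Proof. by []. Qed.

Lemma trkg (X : 'M[K]_2) (u : 'cV[K]_2) (w : 'rV[K]_2) : \tr (X *m (u *m w)) =
  w ord0 i0 * X i0 i0 * u i0 ord0 + w ord0 i0 * X i0 i1 * u i1 ord0 +
  w ord0 i1 * X i1 i0 * u i0 ord0 + w ord0 i1 * X i1 i1 * u i1 ord0.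
Proof.
rewrite mxtrace_mulC -mulmxA mxtrace_mulC /mxtrace big_ord_recl big_ord0 addr0.
rewrite !mxE !big_ord_recl !big_ord0 !addr0 ?mxE ?big_ord_recl ?big_ord0 ?addr0 ?mxE liftE ord0E.
ring.
Qed.
Lemma tr2g (Z : 'M[K]_2) : \tr Z = Z i0 i0 + Z i1 i1.
Proof. by rewrite /mxtrace !big_ord_recl big_ord0 addr0 liftE. Qed.

Definition psi_g (al be : K) (u0 u1 : 'cV[K]_2) : 'cV[K]_(2*(2*2)) :=
  al *: (u0 *t (u0 *t u0)) + be *: (u1 *t (u1 *t u1)).
Definition psi_gr (al be : K) (u0 u1 : 'rV[K]_2) : 'rV[K]_(2*(2*2)) :=
  al *: (u0 *t (u0 *t u0)) + be *: (u1 *t (u1 *t u1)).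
Definition rho_g a b al be ga de (u0 u1 : 'cV[K]_2) (w0 w1 : 'rV[K]_2) h : 'M[K]_(2*(2*2)) :=
  a *: (psi_g al be u0 u1 *m psi_gr ga de w0 w1) + b *: ((u0 *m w0) *t ((u0 *m w0) *t (h *: (1%:M : 'M[K]_2)))).

Lemma rho_form (X Y Z : 'M[K]_2) a b al be ga de u0 u1 w0 w1 h :
  \tr ((X *t (Y *t Z)) *m rho_g a b al be ga de u0 u1 w0 w1 h) =
  a * (al * ga * (\tr (X *m (u0 *m w0)) * (\tr (Y *m (u0 *m w0)) * \tr (Z *m (u0 *m w0))))
     + al * de * (\tr (X *m (u0 *m w1)) * (\tr (Y *m (u0 *m w1)) * \tr (Z *m (u0 *m w1))))
     + be * ga * (\tr (X *m (u1 *m w0)) * (\tr (Y *m (u1 *m w0)) * \tr (Z *m (u1 *m w0))))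
     + be * de * (\tr (X *m (u1 *m w1)) * (\tr (Y *m (u1 *m w1)) * \tr (Z *m (u1 *m w1)))))
  + b * (\tr (X *m (u0 *m w0)) * (\tr (Y *m (u0 *m w0)) * (h * \tr Z))).
Proof.
rewrite /rho_g L0g /psi_g /psi_gr L1g !L2g L3g //.
Qed.

Definition qf (X : 'M[K]_2) (u : 'cV[K]_2) (w : 'rV[K]_2) :=
  w ord0 i0 * X i0 i0 * u i0 ord0 + w ord0 i0 * X i0 i1 * u i1 ord0 +
  w ord0 i1 * X i1 i0 * u i0 ord0 + w ord0 i1 * X i1 i1 * u i1 ord0.
Lemma rho_form2 (X Y Z : 'M[K]_2) a b al be ga de u0 u1 w0 w1 h :
  \tr ((X *t (Y *t Z)) *m rho_g a b al be ga de u0 u1 w0 w1 h) =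
  a * (al * ga * (qf X u0 w0 * (qf Y u0 w0 * qf Z u0 w0))
     + al * de * (qf X u0 w1 * (qf Y u0 w1 * qf Z u0 w1))
     + be * ga * (qf X u1 w0 * (qf Y u1 w0 * qf Z u1 w0))
     + be * de * (qf X u1 w1 * (qf Y u1 w1 * qf Z u1 w1)))
  + b * (qf X u0 w0 * (qf Y u0 w0 * (h * (Z i0 i0 + Z i1 i1)))).
Proof. by rewrite rho_form !trkg tr2g. Qed.
End Gen.

Section S.
Variable R : realType.
Local Notation C := R[i].
Local Open Scope complex_scope.

Lemma tensDr m n p q (A : 'M[C]_(m,n)) (B D : 'M[C]_(p,q)) : A *t (B + D) = A *t B + A *t D.
Proof. by apply/matrixP=> i j; rewrite !mxE mulrDr. Qed.
Lemma tensBr m n p q (A : 'M[C]_(m,n)) (B D : 'M[C]_(p,q)) : A *t (B - D) = A *t B - A *t D.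
Proof. by apply/matrixP=> i j; rewrite !mxE mulrBr. Qed.

Lemma tensNr m n p q (A : 'M[C]_(m,n)) (B : 'M[C]_(p,q)) : A *t (- B) = - (A *t B).
Proof. by apply/matrixP=> i j; rewrite !mxE mulrN. Qed.

Lemma adjD m n (A B : 'M[C]_(m,n)) : adjmx (A + B) = adjmx A + adjmx B.
Proof. by apply/matrixP=> i j; rewrite !mxE rmorphD. Qed.
Lemma conj_cR (r : R) : ((cR r)^*)%R = cR r.
Proof. by rewrite /cR -[(_^*)%R]/(conjc _) /= oppr0. Qed.
Lemma adjZc m n (z : C) (A : 'M[C]_(m,n)) : adjmx (z *: A) = (z^*)%R *: adjmx A.
Proof. by apply/matrixP=> i j; rewrite !mxE rmorphM. Qed.
Lemma adjT3 (u v w : 'cV[C]_2) :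
  @adjmx R (2*(2*2)) 1 (u *t (v *t w)) = adjmx u *t (adjmx v *t adjmx w).
Proof. by apply/matrixP=> i j; rewrite !mxE !rmorphM. Qed.

Local Notation k0 := (ket0 R).
Local Notation k1 := (ket1 R).

Lemma k0_0 : k0 i0 ord0 = 1. Proof. by rewrite mxE. Qed.
Lemma k0_1 : k0 i1 ord0 = 0. Proof. by rewrite mxE. Qed.
Lemma k1_0 : k1 i0 ord0 = 0. Proof. by rewrite mxE. Qed.
Lemma k1_1 : k1 i1 ord0 = 1. Proof. by rewrite mxE. Qed.
Definition kE := (k0_0, k0_1, k1_0, k1_1).
Lemma ak0_0 : adjmx k0 ord0 i0 = 1. Proof. by rewrite !mxE rmorph1. Qed.
Lemma ak0_1 : adjmx k0 ord0 i1 = 0. Proof. by rewrite !mxE rmorph0. Qed.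
Lemma ak1_0 : adjmx k1 ord0 i0 = 0. Proof. by rewrite !mxE rmorph0. Qed.
Lemma ak1_1 : adjmx k1 ord0 i1 = 1. Proof. by rewrite !mxE rmorph1. Qed.
Definition akE := (ak0_0, ak0_1, ak1_0, ak1_1).

Variable p : R.
Definition cc := cos (pi / 8 : R).
Definition ss := sin (pi / 8 : R).

Definition F (X Y Z : 'M[C]_2) : C :=
  cR p * (cR cc * cR cc * (X i0 i0 * Y i0 i0 * Z i0 i0) + cR cc * cR ss * (X i1 i0 * Y i1 i0 * Z i1 i0)
     + cR ss * cR cc * (X i0 i1 * Y i0 i1 * Z i0 i1) + cR ss * cR ss * (X i1 i1 * Y i1 i1 * Z i1 i1))
  + cR (1 - p) * (X i0 i0 * Y i0 i0 * (cR (2^-1) * (Z i0 i0 + Z i1 i1))).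

Lemma rho_eq : rho_chi p = @rho_g C (cR p) (cR (1 - p)) (cR cc) (cR ss) (cR cc) (cR ss)
   k0 k1 (adjmx k0) (adjmx k1) (cR (2^-1)).
Proof.
rewrite /rho_chi /psi_s adjD !adjZc !adjT3 !conj_cR.
reflexivity.
Qed.

Lemma trrho X Y Z : \tr ((X *t (Y *t Z)) *m rho_chi p) = F X Y Z.
Proof.
rewrite rho_eq rho_form2 /qf.
rewrite !akE !kE /F; ring.
Qed.
End S.

Section T.
Variable R : realType.
Local Notation C := R[i].
Local Open Scope complex_scope.
Variable p : R.

Lemma trS a a' b b' c c' : \tr (svetlichny a a' b b' c c' *m rho_chi p) =
  @F R p (dot_sigma a) (dot_sigma b + dot_sigma b') (dot_sigma c)
  + @F R p (dot_sigma a) (dot_sigma b - dot_sigma b') (dot_sigma c')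
  + @F R p (dot_sigma a') (dot_sigma b - dot_sigma b') (dot_sigma c)
  - @F R p (dot_sigma a') (dot_sigma b + dot_sigma b') (dot_sigma c').
Proof.
rewrite /svetlichny !tensDr !tensNr.
by rewrite trSg !trrho.
Qed.

End T.

Section T.
Variable R : realType.
Local Notation C := R[i].
Local Open Scope complex_scope.
Variable p : R.

Definition j0 : 'I_3 := ord0.
Definition j1 : 'I_3 := Ordinal (isT : (1 < 3)%N).
Definition j2 : 'I_3 := ord_max.

Lemma dsE (a : 'rV[R]_3) i j : dot_sigma a i j =
  cR (a ord0 j0) * sigma1 R i j + cR (a ord0 j1) * sigma2 R i j + cR (a ord0 j2) * sigma3 R i j.
Proof.
rewrite /dot_sigma summxE !big_ord_recl big_ord0 addr0 !mxE /= addrA.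
have -> : (lift ord0 ord0 : 'I_3) = j1 by exact: val_inj.
by have -> : (lift ord0 (lift ord0 ord0) : 'I_3) = j2 by exact: val_inj.
Qed.

Lemma ds00 (a : 'rV[R]_3) : dot_sigma a i0 i0 = cR (a ord0 j2).
Proof. rewrite dsE !mxE /=; ring. Qed.
Lemma ds11 (a : 'rV[R]_3) : dot_sigma a i1 i1 = cR (- a ord0 j2).
Proof. rewrite dsE !mxE /= /cR; simpc. by []. Qed.
Lemma ds10 (a : 'rV[R]_3) : dot_sigma a i1 i0 = a ord0 j0 +i* a ord0 j1.
Proof. rewrite dsE !mxE /= /cR; simpc. by []. Qed.
Lemma ds01 (a : 'rV[R]_3) : dot_sigma a i0 i1 = a ord0 j0 +i* (- a ord0 j1).
Proof. rewrite dsE !mxE /= /cR; simpc. by []. Qed.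
Definition dsEE := (ds00, ds11, ds10, ds01).

Lemma cRD (x y : R) : cR (x + y) = cR x + cR y.
Proof. by rewrite /cR; simpc. Qed.
Lemma cRN (x : R) : cR (- x) = - cR x.
Proof. by rewrite /cR; simpc. Qed.

Lemma dsD (b b' : 'rV[R]_3) : dot_sigma b + dot_sigma b' = dot_sigma (b + b').
Proof.
rewrite /dot_sigma -big_split; apply: eq_bigr => k _.
by rewrite mxE cRD scalerDl.
Qed.
Lemma dsB (b b' : 'rV[R]_3) : dot_sigma b - dot_sigma b' = dot_sigma (b - b').
Proof.
rewrite /dot_sigma -sumrB; apply: eq_bigr => k _.
by rewrite !mxE cRD cRN scalerDl scaleNr.
Qed.

Definition hc := cc R ^+ 2 - ss R ^+ 2.
Definition hs := 2 * cc R * ss R.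
Definition Q (a u v : 'rV[R]_3) : R :=
  hc * (a ord0 j2 * u ord0 j2 * v ord0 j2) +
  hs * (a ord0 j0 * u ord0 j0 * v ord0 j0 - a ord0 j0 * u ord0 j1 * v ord0 j1
        - a ord0 j1 * u ord0 j0 * v ord0 j1 - a ord0 j1 * u ord0 j1 * v ord0 j0).

Lemma FG (a u v : 'rV[R]_3) : @F R p (dot_sigma a) (dot_sigma u) (dot_sigma v) = cR (p * Q a u v).
Proof.
rewrite /F !dsEE /Q /hc /hs /cR; simpc.
congr (_ +i* _); ring.
Qed.

Definition Sig a a' b b' c c' :=
  Q a (b + b') c + Q a (b - b') c' + Q a' (b - b') c - Q a' (b + b') c'.

Lemma trE a a' b b' c c' : \tr (svetlichny a a' b b' c c' *m rho_chi p) =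
  cR (p * Sig a a' b b' c c').
Proof.
rewrite trS dsD dsB !FG /Sig /cR; simpc.
congr (_ +i* _); rewrite /Q; ring.
Qed.
End T.


Section Trig.
Variable R : realType.
Lemma sqrt2P : (Num.sqrt 2 : R) ^+ 2 = 2 /\ 0 < (Num.sqrt 2 : R).
Proof. by split; [rewrite sqr_sqrtr // ler0n | rewrite sqrtr_gt0 ltr0n]. Qed.
Lemma t1 : (pi / 4 : R) *+ 2 = pi / 2.
Proof. by rewrite -mulr_natr; field. Qed.
Lemma t2 : 0 < cos (pi / 4 : R).
Proof.
have hpi := @pi_gt0 R.
apply: cos_gt0_pihalf; apply/andP; split.
rewrite ltrNl; apply: (@lt_trans _ _ 0); rewrite ?oppr0 ?divr_gt0 //; lra.
lra.
Qed.
Lemma aux1 : forall w r : R, w^+2*2%:R = 1 -> 0<w -> r^+2 = 2 -> 0<r -> w = r/2.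
Proof.
move=> w r H1 H2 H3 H4.
have : (w - r/2) * (w + r/2) = 0 by rewrite -subr_sqr expr_div_n H3; lra.
by move/eqP; rewrite mulf_eq0 => /orP [/eqP H|/eqP H]; lra.
Qed.
Lemma aux2 : forall w s r : R, w = r/2 -> w*s*2%:R = 1 -> r^+2 = 2 -> s = r/2.
Proof.
move=> w s r -> H2 H3.
have : r * (r / 2 * s * 2%:R) = r by rewrite H2 mulr1.
have -> : r * (r / 2 * s * 2%:R) = r^+2 * s by field.
rewrite H3 => H; lra.
Qed.

Lemma cos_pi4 : cos (pi / 4 : R) = Num.sqrt 2 / 2 /\ sin (pi / 4 : R) = Num.sqrt 2 / 2.
Proof.
have [r2 r0] := sqrt2P.
have c0 := t2.
have h1 : cos (pi / 4 : R) ^+ 2 *+ 2 = 1.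
  by have := cos_mulr2n (pi / 4 : R); rewrite t1 cos_pihalf => /eqP; rewrite eq_sym subr_eq0 => /eqP.
have h2 : (cos (pi / 4 : R) * sin (pi / 4)) *+ 2 = 1.
  by rewrite -sin_mulr2n t1 sin_pihalf.
rewrite -mulr_natr in h1; rewrite -mulr_natr in h2.
have hc := aux1 _ _ h1 c0 r2 r0.
split => //.
exact: aux2 _ _ _ hc h2 r2.
Qed.

Lemma t8 : (pi / 4 : R) = (pi / 8) *+ 2.
Proof. by rewrite -mulr_natr; field. Qed.

Lemma hcE : hc R = Num.sqrt 2 / 2.
Proof.
rewrite /hc /cc /ss -(proj1 cos_pi4) t8 cos_mulr2n.
have := cos2Dsin2 (pi / 8 : R); rewrite -mulr_natr.
generalize (cos (pi / 8 : R)) (sin (pi / 8 : R)) => x y h; lra.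
Qed.
Lemma hsE : hs R = Num.sqrt 2 / 2.
Proof.
rewrite /hs /cc /ss -(proj2 cos_pi4) t8 sin_mulr2n -mulr_natr; ring.
Qed.
End Trig.

Section Ineq.
Variable R : realType.
Lemma sq2 (x : R) : 0 <= 2 * x ^+ 2.
Proof. by apply: mulr_ge0 => //; apply: sqr_ge0. Qed.
Lemma comb (r s U V : R) : r^+2 = 2 -> 0 <= r^+2 * U - 2*r*s + V -> U = 4 -> V <= 8 -> r * s <= 8.
Proof. move=> r2 H hU HV; rewrite r2 hU in H; lra. Qed.
Lemma comb2 (r s : R) : r^+2 = 2 -> 0 < r -> r * s <= 8 -> - (r * s) <= 8 -> `|s| <= 4 * r.
Proof.
move=> r2 r0 h1 h2.
have e : 8 = r * (4 * r) by rewrite mulrCA -expr2 r2; lra.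
rewrite e in h1 h2; rewrite ler_norml; apply/andP; split.
- rewrite -mulrN in h2; rewrite lerNl; rewrite -(ler_pM2l r0); lra.
- by rewrite -(ler_pM2l r0).
Qed.

Definition Sg (a0 a1 a2 A0 A1 A2 b0 b1 b2 B0 B1 B2 c0 c1 c2 C0 C1 C2 : R) := ((a2*(b2+B2)*c2 + a0*(b0+B0)*c0 - a0*(b1+B1)*c1 - a1*(b0+B0)*c1 - a1*(b1+B1)*c0) + (a2*(b2-B2)*C2 + a0*(b0-B0)*C0 - a0*(b1-B1)*C1 - a1*(b0-B0)*C1 - a1*(b1-B1)*C0) + (A2*(b2-B2)*c2 + A0*(b0-B0)*c0 - A0*(b1-B1)*c1 - A1*(b0-B0)*c1 - A1*(b1-B1)*c0) - (A2*(b2+B2)*C2 + A0*(b0+B0)*C0 - A0*(b1+B1)*C1 - A1*(b0+B0)*C1 - A1*(b1+B1)*C0)) .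

Lemma ineq (r a0 a1 a2 A0 A1 A2 b0 b1 b2 B0 B1 B2 c0 c1 c2 C0 C1 C2 : R) :
  r^+2 = 2 -> 0 < r ->
  (a0^+2 + a1^+2 + a2^+2) = 1 -> (A0^+2 + A1^+2 + A2^+2) = 1 -> (b0^+2 + b1^+2 + b2^+2) = 1 -> (B0^+2 + B1^+2 + B2^+2) = 1 -> (c0^+2 + c1^+2 + c2^+2) = 1 -> (C0^+2 + C1^+2 + C2^+2) = 1 ->
  `| Sg a0 a1 a2 A0 A1 A2 b0 b1 b2 B0 B1 B2 c0 c1 c2 C0 C1 C2 | <= 4 * r.
Proof.
rewrite /Sg.
move=> r2 r0 ha hA hb hB hc hC.
have -> : ((a2*(b2+B2)*c2 + a0*(b0+B0)*c0 - a0*(b1+B1)*c1 - a1*(b0+B0)*c1 - a1*(b1+B1)*c0) + (a2*(b2-B2)*C2 + a0*(b0-B0)*C0 - a0*(b1-B1)*C1 - a1*(b0-B0)*C1 - a1*(b1-B1)*C0) + (A2*(b2-B2)*c2 + A0*(b0-B0)*c0 - A0*(b1-B1)*c1 - A1*(b0-B0)*c1 - A1*(b1-B1)*c0) - (A2*(b2+B2)*C2 + A0*(b0+B0)*C0 - A0*(b1+B1)*C1 - A1*(b0+B0)*C1 - A1*(b1+B1)*C0)) = ((b0+B0)*((a0*c0 - A0*C0) - (a1*c1 - A1*C1)) + (b1+B1)*(- (a0*c1 - A0*C1) - (a1*c0 - A1*C0)) + (b2+B2)*(a2*c2 - A2*C2) + (b0-B0)*((a0*C0 + A0*c0) - (a1*C1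 + A1*c1)) + (b1-B1)*(- (a0*C1 + A0*c1) - (a1*C0 + A1*c0)) + (b2-B2)*(a2*C2 + A2*c2)) by ring.
have hU : ((b0+B0)^+2 + (b1+B1)^+2 + (b2+B2)^+2 + (b0-B0)^+2 + (b1-B1)^+2 + (b2-B2)^+2) = 4.
  have -> : ((b0+B0)^+2 + (b1+B1)^+2 + (b2+B2)^+2 + (b0-B0)^+2 + (b1-B1)^+2 + (b2-B2)^+2) = 2 * ((b0^+2 + b1^+2 + b2^+2) + (B0^+2 + B1^+2 + B2^+2)) by ring.
  by rewrite hb hB; lra.
have hV : (((a0*c0 - A0*C0) - (a1*c1 - A1*C1))^+2 + (- (a0*c1 - A0*C1) - (a1*c0 - A1*C0))^+2 + (a2*c2 - A2*C2)^+2 + ((a0*C0 + A0*c0) - (a1*C1 + A1*c1))^+2 + (- (a0*C1 + A0*c1) - (a1*C0 + A1*c0))^+2 + (a2*C2 + A2*c2)^+2) <= 8.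
  have e1 : (((a0*c0 - A0*C0) - (a1*c1 - A1*C1))^+2 + (- (a0*c1 - A0*C1) - (a1*c0 - A1*C0))^+2 + (a2*c2 - A2*C2)^+2 + ((a0*C0 + A0*c0) - (a1*C1 + A1*c1))^+2 + (- (a0*C1 + A0*c1) - (a1*C0 + A1*c0))^+2 + (a2*C2 + A2*c2)^+2) = 2 * ((a0*c0 - A0*C0)^+2 + (a0*c1 - A0*C1)^+2 + (a0*c2 - A0*C2)^+2 + (a1*c0 - A1*C0)^+2 + (a1*c1 - A1*C1)^+2 + (a1*c2 - A1*C2)^+2 + (a2*c0 - A2*C0)^+2 + (a2*c1 - A2*C1)^+2 + (a2*c2 - A2*C2)^+2 + (a0*C0 + A0*c0)^+2 + (a0*C1 + A0*c1)^+2 + (a0*C2 + A0*c2)^+2 + (a1*C0 + A1*c0)^+2 + (a1*C1 + A1*c1)^+2 + (a1*C2 + A1*c2)^+2 + (a2*C0 + A2*c0)^+2 + (a2*C1 + A2*c1)^+2 + (a2*C2 + A2*c2)^+2) - (((a0*c0 - A0*C0) + (a1*c1 - A1*C1))^+2 + ((a0*c1 - A0*C1) - (a1*c0 - A1*C0))^+2 + (a2*c2 - A2*C2)^+2 + 2*(a0*c2 - A0*C2)^+2 + 2*(a1*c2 - A1*C2)^+2 + 2*(a2*c0 - A2*C0)^+2 + 2*(a2*c1 - A2*C1)^+2 + ((a0*C0 + A0*c0) + (a1*C1 + A1*c1))^+2 + ((a0*C1 + A0*c1) - (a1*C0 + A1*c0))^+2 + (a2*C2 + A2*c2)^+2 +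 2*(a0*C2 + A0*c2)^+2 + 2*(a1*C2 + A1*c2)^+2 + 2*(a2*C0 + A2*c0)^+2 + 2*(a2*C1 + A2*c1)^+2) by ring.
  have e2 : ((a0*c0 - A0*C0)^+2 + (a0*c1 - A0*C1)^+2 + (a0*c2 - A0*C2)^+2 + (a1*c0 - A1*C0)^+2 + (a1*c1 - A1*C1)^+2 + (a1*c2 - A1*C2)^+2 + (a2*c0 - A2*C0)^+2 + (a2*c1 - A2*C1)^+2 + (a2*c2 - A2*C2)^+2 + (a0*C0 + A0*c0)^+2 + (a0*C1 + A0*c1)^+2 + (a0*C2 + A0*c2)^+2 + (a1*C0 + A1*c0)^+2 + (a1*C1 + A1*c1)^+2 + (a1*C2 + A1*c2)^+2 + (a2*C0 + A2*c0)^+2 + (a2*C1 + A2*c1)^+2 + (a2*C2 + A2*c2)^+2) = (a0^+2 + a1^+2 + a2^+2) * ((c0^+2 + c1^+2 + c2^+2) + (C0^+2 + C1^+2 + C2^+2)) + (A0^+2 + A1^+2 + A2^+2) * ((c0^+2 + c1^+2 + c2^+2) + (C0^+2 + C1^+2 + C2^+2)) by ring.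
  rewrite e2 ha hA hc hC in e1; rewrite e1.
  have : 0 <= (((a0*c0 - A0*C0) + (a1*c1 - A1*C1))^+2 + ((a0*c1 - A0*C1) - (a1*c0 - A1*C0))^+2 + (a2*c2 - A2*C2)^+2 + 2*(a0*c2 - A0*C2)^+2 + 2*(a1*c2 - A1*C2)^+2 + 2*(a2*c0 - A2*C0)^+2 + 2*(a2*c1 - A2*C1)^+2 + ((a0*C0 + A0*c0) + (a1*C1 + A1*c1))^+2 + ((a0*C1 + A0*c1) - (a1*C0 + A1*c0))^+2 + (a2*C2 + A2*c2)^+2 + 2*(a0*C2 + A0*c2)^+2 + 2*(a1*C2 + A1*c2)^+2 + 2*(a2*C0 + A2*c0)^+2 + 2*(a2*C1 + A2*c1)^+2) by rewrite !addr_ge0 // ?sqr_ge0 // ?sq2.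
  lra.
apply: comb2 => //.
- apply: (comb _ _ _ _ r2 _ hU hV).
  have -> : r ^+ 2 * ((b0+B0)^+2 + (b1+B1)^+2 + (b2+B2)^+2 + (b0-B0)^+2 + (b1-B1)^+2 + (b2-B2)^+2) - 2 * r * ((b0+B0)*((a0*c0 - A0*C0) - (a1*c1 - A1*C1)) + (b1+B1)*(- (a0*c1 - A0*C1) - (a1*c0 - A1*C0)) + (b2+B2)*(a2*c2 - A2*C2) + (b0-B0)*((a0*C0 + A0*c0) - (a1*C1 + A1*c1)) + (b1-B1)*(- (a0*C1 + A0*c1) - (a1*C0 + A1*c0)) + (b2-B2)*(a2*C2 + A2*c2)) + (((a0*c0 - A0*C0) - (a1*c1 - A1*C1))^+2 + (- (a0*c1 - A0*C1) - (a1*c0 - A1*C0))^+2 + (a2*c2 - A2*C2)^+2 + ((a0*C0 + A0*c0) - (a1*C1 + A1*c1))^+2 + (- (a0*C1 + A0*c1) - (a1*C0 + A1*c0))^+2 + (a2*C2 + A2*c2)^+2) = ((r*(b0+B0) - ((a0*c0 - A0*C0) - (a1*c1 - A1*C1)))^+2 + (r*(b1+B1) - (- (a0*c1 - A0*C1) - (a1*c0 - A1*C0)))^+2 + (r*(b2+B2) - (a2*c2 - A2*C2))^+2 + (r*(b0-B0) - ((a0*C0 + A0*c0) - (a1*C1 + A1*c1)))^+2 + (r*(b1-B1) - (- (a0*C1 + A0*c1) - (a1*C0 + A1*c0)))^+2 + (r*(b2-B2) - (a2*C2 + A2*c2))^+2) by ring.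
  by rewrite !addr_ge0 // ?sqr_ge0.
- rewrite -mulrN; apply: (comb _ _ _ _ r2 _ hU hV).
  have -> : r ^+ 2 * ((b0+B0)^+2 + (b1+B1)^+2 + (b2+B2)^+2 + (b0-B0)^+2 + (b1-B1)^+2 + (b2-B2)^+2) - 2 * r * (- ((b0+B0)*((a0*c0 - A0*C0) - (a1*c1 - A1*C1)) + (b1+B1)*(- (a0*c1 - A0*C1) - (a1*c0 - A1*C0)) + (b2+B2)*(a2*c2 - A2*C2) + (b0-B0)*((a0*C0 + A0*c0) - (a1*C1 + A1*c1)) + (b1-B1)*(- (a0*C1 + A0*c1) - (a1*C0 + A1*c0)) + (b2-B2)*(a2*C2 + A2*c2))) + (((a0*c0 - A0*C0) - (a1*c1 - A1*C1))^+2 + (- (a0*c1 - A0*C1) - (a1*c0 - A1*C0))^+2 + (a2*c2 - A2*C2)^+2 + ((a0*C0 + A0*c0) - (a1*C1 + A1*c1))^+2 + (- (a0*C1 + A0*c1) - (a1*C0 + A1*c0))^+2 + (a2*C2 + A2*c2)^+2) = ((r*(b0+B0) + ((a0*c0 - A0*C0) - (a1*c1 - A1*C1)))^+2 + (r*(b1+B1) + (- (a0*c1 - A0*C1) - (a1*c0 - A1*C0)))^+2 + (r*(b2+B2) + (a2*c2 - A2*C2))^+2 + (r*(b0-B0) + ((a0*C0 + A0*c0) - (a1*C1 + A1*c1)))^+2 + (r*(b1-B1) + (- (a0*C1 + A0*c1) - (a1*C0 + A1*c0)))^+2 + (r*(b2-B2) + (a2*C2 + A2*c2))^+2) by ring.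
  by rewrite !addr_ge0 // ?sqr_ge0.
Qed.
End Ineq.

Section M.
Variable R : realType.
Local Notation C := R[i].
Local Open Scope complex_scope.

Lemma unitE (a : 'rV[R]_3) : unit_vec a <-> a ord0 j0 ^+ 2 + a ord0 j1 ^+ 2 + a ord0 j2 ^+ 2 = 1.
Proof.
rewrite /unit_vec !big_ord_recl big_ord0 addr0 addrA.
have -> : (lift ord0 ord0 : 'I_3) = j1 by exact: val_inj.
by have -> : (lift ord0 (lift ord0 ord0) : 'I_3) = j2 by exact: val_inj.
Qed.

Let r := Num.sqrt 2 : R.

Lemma SigE (a a' b b' c c' : 'rV[R]_3) : @Sig R a a' b b' c c' = r / 2 *
  @Sg R (a ord0 j0) (a ord0 j1) (a ord0 j2) (a' ord0 j0) (a' ord0 j1) (a' ord0 j2)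
     (b ord0 j0) (b ord0 j1) (b ord0 j2) (b' ord0 j0) (b' ord0 j1) (b' ord0 j2)
     (c ord0 j0) (c ord0 j1) (c ord0 j2) (c' ord0 j0) (c' ord0 j1) (c' ord0 j2).
Proof. rewrite /Sig /Q hcE hsE /Sg /r !mxE; ring. Qed.

Lemma normcR (x : R) : `| cR x | = cR `|x|.
Proof. rewrite /cR; simpc. by rewrite expr0n /= addr0 sqrtr_sqr. Qed.
Lemma lecR' (x y : R) : (cR x <= cR y) = (x <= y).
Proof. exact: lecR. Qed.

Lemma bound (p : R) (a a' b b' c c' : 'rV[R]_3) : 0 <= p ->
  unit_vec a -> unit_vec a' -> unit_vec b -> unit_vec b' -> unit_vec c -> unit_vec c' ->
  `| \tr (svetlichny a a' b b' c c' *m rho_chi p) | <= cR (4 * p).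
Proof.
move=> p0 /unitE ha /unitE hA /unitE hb /unitE hB /unitE hc /unitE hC.
have [r2 r0] := sqrt2P R.
rewrite trE SigE normcR lecR'.
have := @ineq R _ _ _ _ _ _ _ _ _ _ _ _ _ _ _ _ _ _ _ r2 r0 ha hA hb hB hc hC.
set s := Sg _ _ _ _ _ _ _ _ _ _ _ _ _ _ _ _ _ _ => hs.
rewrite normrM (ger0_norm p0) normrM ger0_norm; last by rewrite divr_ge0 // ltW.
have e : 4 * p = p * (r / 2 * (4 * r)).
  have -> : r / 2 * (4 * r) = 2 * r ^+ 2 by rewrite /r; field.
  by rewrite /r r2; ring.
rewrite e ler_wpM2l // ler_wpM2l // divr_ge0 // ltW. all: try by [].
Qed.

Definition vec3 (x y z : R) : 'rV[R]_3 :=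
  \row_(k < 3) (if val k == 0%N then x else if val k == 1%N then y else z).
Lemma vec3E x y z : [/\ vec3 x y z ord0 j0 = x, vec3 x y z ord0 j1 = y & vec3 x y z ord0 j2 = z].
Proof. by rewrite !mxE. Qed.
Lemma unit3 x y z : x ^+ 2 + y ^+ 2 + z ^+ 2 = 1 -> unit_vec (vec3 x y z).
Proof. by move=> h; apply/unitE; case: (vec3E x y z) => -> -> ->. Qed.

Lemma attain (p : R) : 0 <= p -> exists a a' b b' c c' : 'rV[R]_3,
        unit_vec a /\ unit_vec a' /\ unit_vec b /\ unit_vec b' /\
        unit_vec c /\ unit_vec c' /\
        `| \tr (svetlichny a a' b b' c c' *m rho_chi p) | = cR (4 * p).
Proof.
move=> p0; have [r2 r0] := sqrt2P R.
exists (vec3 1 0 0), (vec3 0 1 0), (vec3 1 0 0), (vec3 0 1 0),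
  (vec3 (r / 2) (- (r / 2)) 0), (vec3 (r / 2) (r / 2) 0).
have hr : (r / 2) ^+ 2 + (- (r / 2)) ^+ 2 + 0 ^+ 2 = 1.
  by rewrite sqrrN expr0n /= addr0 expr_div_n /r r2; field.
have hr' : (r / 2) ^+ 2 + (r / 2) ^+ 2 + 0 ^+ 2 = 1.
  by rewrite expr0n /= addr0 expr_div_n /r r2; field.
split; first by apply: unit3; rewrite expr1n expr0n /= addr0 addr0.
split; first by apply: unit3; rewrite expr1n expr0n /= addr0 add0r.
split; first by apply: unit3; rewrite expr1n expr0n /= addr0 addr0.
split; first by apply: unit3; rewrite expr1n expr0n /= addr0 add0r.
split; first exact: unit3.
split; first exact: unit3.
rewrite trE SigE !mxE /= normcR; congr cR.
have e : r / 2 * Sg R 1 0 0 0 1 0 1 0 0 0 1 0 (r / 2) (- (r / 2)) 0 (r / 2) (r / 2) 0 = 4.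
  rewrite /Sg /r; transitivity (Num.sqrt 2 ^+ 2 * 2 : R); first by field.
  rewrite r2; ring.
by rewrite e ger0_norm ?mulr_ge0 // mulrC.
Qed.
End M.

Section SV.
Variable R : realType.
Local Notation C := R[i].
Local Open Scope complex_scope.
Variable p : R.

Definition delta (k : 'I_3) : 'rV[R]_3 := \row_(m < 3) ((val k == val m)%:R : R).

Lemma cR1 : cR (1 : R) = 1. Proof. by []. Qed.
Lemma cR0 : cR (0 : R) = 0. Proof. by []. Qed.

Lemma pauliE (k : 'I_3) : pauli R k = dot_sigma (delta k).
Proof.
apply/matrixP => x y; rewrite dsE !mxE.
case: k => [[|[|[|//]]] Hk] /=; by rewrite /pauli /= mxE cR1 cR0 !mul0r !mul1r ?add0r ?addr0.
Qed.

Definition TT (i j k : 'I_3) : R := p * @Q R (delta i) (delta j) (delta k).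

Lemma Ment j l : corr_mx (rho_chi p) j l = cR (TT (mxtens_unindex l).1 j (mxtens_unindex l).2).
Proof.
rewrite mxE mxtrace_mulC trrho !pauliE FG.
done.
Qed.

Lemma cRM (x y : R) : cR (x * y) = cR x * cR y.
Proof. by rewrite /cR; simpc. Qed.

Lemma sum_cR (I : finType) (f : I -> R) : \sum_i cR (f i) = cR (\sum_i f i).
Proof. by rewrite (big_morph (@cR R) (@cRD R) (erefl (cR 0))). Qed.

Lemma sum9 (f : 'I_3 -> 'I_3 -> R) :
  \sum_(l < 3 * 3) f (mxtens_unindex l).1 (mxtens_unindex l).2 = \sum_(i < 3) \sum_(k < 3) f i k.
Proof.
rewrite pair_big; symmetry; apply: reindex => //=.
by exists (@mxtens_index 3 3) => l _; rewrite (mxtens_indexK, mxtens_unindexK).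
Qed.

Lemma MMent j j' : (corr_mx (rho_chi p) *m adjmx (corr_mx (rho_chi p))) j j' =
  cR (\sum_(i < 3) \sum_(k < 3) TT i j k * TT i j' k).
Proof.
rewrite mxE -sum9 -sum_cR; apply: eq_bigr => l _.
by rewrite Ment /adjmx mxE [map_mx _ _ _ _]mxE Ment conj_cR cRM.
Qed.

Definition Dm (j j' : 'I_3) := \sum_(i < 3) \sum_(k < 3) TT i j k * TT i j' k.

Lemma Dm_eq (j j' : 'I_3) : Dm j j' =
  if val j == val j' then (if val j == 2%N then (p * hc R)^+2 else 2 * (p * hs R)^+2) else 0.
Proof.
rewrite /Dm /TT /Q !big_ord_recl !big_ord0 !mxE /=.
case: j => [[|[|[|//]]] Hj]; case: j' => [[|[|[|//]]] Hj'] /=; ring.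
Qed.

Lemma MMent2 j j' : (corr_mx (rho_chi p) *m adjmx (corr_mx (rho_chi p))) j j' = cR (Dm j j').
Proof. exact: MMent. Qed.

Lemma sv : 0 <= p -> singular_values (corr_mx (rho_chi p)) [:: p; p; Num.sqrt 2 / 2 * p].
Proof.
move=> p0; have [r2 r0] := sqrt2P R.
split => //.
  by rewrite /= p0 mulr_ge0 // divr_ge0 // ltW.
rewrite char_poly_trig; last first.
  apply/is_trig_mxP => i j lt; rewrite MMent2 Dm_eq (ltn_eqF lt); exact: cR0.
rewrite !big_ord_recl big_ord0 mulr1 !big_cons big_nil mulr1 !MMent2 !Dm_eq /=.
rewrite hcE hsE.
have e1 : cR (2 * (p * (Num.sqrt 2 / 2)) ^+ 2) = cR (p ^+ 2).
  by congr cR; rewrite exprMn expr_div_n r2; field.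
have e2 : cR ((p * (Num.sqrt 2 / 2)) ^+ 2) = cR ((Num.sqrt 2 / 2 * p) ^+ 2).
  by rewrite mulrC.
by rewrite e1 e2.
Qed.
End SV.

Theorem mainTheorem2 (R : realType) (p : R) (hp : 0 <= p <= 1) :
  singular_values (corr_mx (rho_chi p))
    [:: p; p; Num.sqrt 2 / 2 * p]
  /\ (forall a a' b b' c c' : 'rV[R]_3,
        unit_vec a -> unit_vec a' -> unit_vec b -> unit_vec b' ->
        unit_vec c -> unit_vec c' ->
        `| \tr (svetlichny a a' b b' c c' *m rho_chi p) | <= cR (4 * p))
  /\ (exists a a' b b' c c' : 'rV[R]_3,
        unit_vec a /\ unit_vec a' /\ unit_vec b /\ unit_vec b' /\
        unit_vec c /\ unit_vec c' /\
        `| \tr (svetlichny a a' b b' c c' *m rho_chi p) | = cR (4 * p))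
  /\ (forall a a' b b' c c' : 'rV[R]_3,
        unit_vec a -> unit_vec a' -> unit_vec b -> unit_vec b' ->
        unit_vec c -> unit_vec c' ->
        `| \tr (svetlichny a a' b b' c c' *m rho_chi p) | <= 4).

Proof.
case/andP: hp => p0 p1.
split; first exact: (@sv R p p0).
split; first by move=> a a' b b' c c' ha hA hb hB hc hC; exact: (@bound R p a a' b b' c c' p0 ha hA hb hB hc hC).
split; first exact: (@attain R p p0).
move=> a a' b b' c c' ha hA hb hB hc hC.
apply: le_trans (@bound R p a a' b b' c c' p0 ha hA hb hB hc hC) _.
have -> : (4 : R[i]) = cR 4 by rewrite /cR -[((4:R) +i* 0)%C]/((4:R)%:C)%C rmorph_nat.
rewrite (@lecR' R); lra.
Qed.
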